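(* Assume Conditions 1–3 of the context hold and run the projected delayed-gradient method of the context with step sizes $\eta_t=\frac{3}{\alpha t}$ for $t\in\{\tau,\dots,T-1+\tau\}$. Then for every $x_\star\in\mathcal{W}$, $$\sum_{t=k}^{T-1}\big(f_{t;k}(x_t)-f_{t;k}(x_\star)\big)\le-\frac{\alpha}{6}\sum_{t=0}^{T-1}\|x_t-x_\star\|^2+\frac{\alpha G^2(3k+5\tau+3)}{6}+\frac{3L_g^2(1+\tau)}{\alpha}\log T+\sum_{t=k}^{T-1}\Big(\frac{3}{2\alpha}\|\varepsilon_t\|^2-\varepsilon_t^{s\top}(x_t-x_\star)\Big),$$ where $\varepsilon_t^s=\nabla f_t(x_t)-\nabla f_{t;k}(x_t)$.
   Context: Let $\mathcal{W}\subseteq\mathbb{R}^d$ be convex and let $T,\tau,k,h$ be integers with $\tau\ge1$, $h\ge1$, $\tau<k<T$. On a probability space with filtration $\{\mathcal{F}_t\}_{t\ge0}$, let $F_t:\mathcal{W}^{h+1}\to\mathbb{R}$, $t\in\{0,\dots,T-1\}$, be (random) functions and $f_t(x)=F_t(x,\dots,x)$; let $f_{t;k}(x)=\mathbb{E}[f_t(x)\mid\mathcal{F}_{t-k}]$. Condition 1: each $f_t$ is $L_f$-Lipschitz on $\mathcal{W}$ with $\max_{x\in\mathcal{W}}\|\nabla^2f_t(x)\|\le\beta$, and $f_{t;k}$ is $\alpha$-strongly convex ($\nabla^2f_{t;k}(x)\succeq\alpha I_d$ on $\mathcal{W}$) for all $t\in\{k,\dots,T-1\}$. Condition 2: each $F_t$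 is $L_c$-coordinatewise-Lipschitz, i.e. changing the $j$-th argument from $x_j$ to $\tilde x_j$ changes $F_t$ by at most $L_c\|x_j-\tilde x_j\|$, for every $j\in\{0,\dots,h\}$. Condition 3: $\sup_{x,y\in\mathcal{W}}\|x-y\|\le G$, and $\|g_t\|\le L_g$ for all $t\in\{0,\dots,T-1\}$. Method (OCO with memory and delayed feedback): initialize $x_0=\cdots=x_\tau\in\mathcal{W}$; for $t=\tau,\dots,T-1+\tau$, obtain $g_{t-\tau}=\nabla f_{t-\tau}(x_{t-\tau})+\varepsilon_{t-\tau}$ where $\varepsilon_{t-\tau}\in\mathbb{R}^d$ is an (arbitrary) gradient error, and set $x_{t+1}=\Pi_{\mathcal{W}}(x_t-\eta_tg_{t-\tau})$, with $\Pi_{\mathcal{W}}$ the Euclidean projection onto $\mathcal{W}$. *)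

(* Defs.v *)
From HB Require Import structures.
From mathcomp Require Import all_boot all_order all_algebra.
From mathcomp Require Import all_classical all_reals all_analysis.
Set Implicit Arguments. Unset Strict Implicit. Unset Printing Implicit Defensive.
Import Order.TTheory GRing.Theory Num.Theory.
Import numFieldNormedType.Exports.
Local Open Scope classical_set_scope.
Local Open Scope ring_scope.

Definition dotv {R : realType} {d : nat} (u v : 'rV[R]_d) : R :=
  \sum_(i < d) u ord0 i * v ord0 i.
Definition enorm {R : realType} {d : nat} (v : 'rV[R]_d) : R :=
  Num.sqrt (dotv v v).

Definition basisv {R : realType} {d : nat} (i : 'I_d) : 'rV[R]_d :=
  \row_(j < d) (if j == i then 1 else 0).

Definition grad {R : realType} {d : nat} (f : 'rV[R]_d -> R) (x : 'rV[R]_d)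
  : 'rV[R]_d := \row_(i < d) ('d f x (basisv i)).

Definition hess {R : realType} {d : nat} (f : 'rV[R]_d -> R) (x : 'rV[R]_d)
  : 'rV[R]_d -> 'rV[R]_d := 'd (grad f) x.

Definition twice_diff {R : realType} {d : nat} (f : 'rV[R]_d -> R) (x : 'rV[R]_d)
  : Prop := differentiable f x /\ differentiable (grad f) x.

Definition is_proj {R : realType} {d : nat} (W : set 'rV[R]_d) (y p : 'rV[R]_d)
  : Prop := W p /\ forall z, W z -> enorm (y - p) <= enorm (y - z).

Definition sub_sigma {dT : measure_display} {T : measurableType dT}
  (G : set (set T)) : Prop :=
  sigma_algebra setT G /\ (forall A, G A -> measurable A).

Definition filtration {dT : measure_display} {T : measurableType dT}
  (Fil : nat -> set (set T)) : Prop :=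
  (forall n, sub_sigma (Fil n)) /\ (forall n m, (n <= m)%N -> Fil n `<=` Fil m).

Definition is_cond_exp {dT : measure_display} {T : measurableType dT}
  {R : realType} (P : probability T R) (G : set (set T)) (X Y : T -> R) : Prop :=
  [/\ measurable_fun setT X,
      P.-integrable setT (EFin \o X),
      (forall B : set R, measurable B -> G (Y @^-1` B)),
      P.-integrable setT (EFin \o Y) &
      (forall A, G A -> (\int[P]_(w in A) (Y w)%:E = \int[P]_(w in A) (X w)%:E)%E)].

(* Main.v *)
Require Import Defs.
From HB Require Import structures.
From mathcomp Require Import all_boot all_order all_algebra.
From mathcomp Require Import all_classical all_reals all_analysis.
From mathcomp Require Import ring lra zify.
Import Order.TTheory GRing.Theory Num.Theory.
Import numFieldNormedType.Exports.
Local Open Scope classical_set_scope.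
Local Open Scope ring_scope.
Section Dot.
Context {R : realType} {d : nat}.
Implicit Types u v w : 'rV[R]_d.

Lemma dotvC u v : dotv u v = dotv v u.
Proof. by rewrite /dotv; apply: eq_bigr => i _; rewrite mulrC. Qed.
Lemma dotvDl u v w : dotv (u + v) w = dotv u w + dotv v w.
Proof. by rewrite /dotv -big_split; apply: eq_bigr => i _; rewrite !mxE mulrDl. Qed.
Lemma dotvZl (a : R) u w : dotv (a *: u) w = a * dotv u w.
Proof. by rewrite /dotv mulr_sumr; apply: eq_bigr => i _; rewrite !mxE mulrA. Qed.
Lemma dotvNl u w : dotv (- u) w = - dotv u w.
Proof. by rewrite -scaleN1r dotvZl mulN1r. Qed.
Lemma dotvBl u v w : dotv (u - v) w = dotv u w - dotv v w.
Proof. by rewrite dotvDl dotvNl. Qed.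
Lemma dotvDr u v w : dotv w (u + v) = dotv w u + dotv w v.
Proof. by rewrite dotvC dotvDl !(dotvC w). Qed.
Lemma dotvBr u v w : dotv w (u - v) = dotv w u - dotv w v.
Proof. by rewrite dotvC dotvBl !(dotvC w). Qed.
Lemma dotvZr (a : R) u w : dotv w (a *: u) = a * dotv w u.
Proof. by rewrite dotvC dotvZl dotvC. Qed.
Lemma dotvNr u w : dotv w (- u) = - dotv w u.
Proof. by rewrite dotvC dotvNl dotvC. Qed.
Lemma dotv_ge0 u : 0 <= dotv u u.
Proof. by rewrite /dotv; apply: sumr_ge0 => i _; rewrite -expr2 sqr_ge0. Qed.
Lemma enorm_sq u : enorm u ^+ 2 = dotv u u.
Proof. by rewrite /enorm sqr_sqrtr // dotv_ge0. Qed.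
Lemma enorm_ge0 u : 0 <= enorm u.
Proof. by rewrite /enorm sqrtr_ge0. Qed.

Lemma young u v (l : R) : 0 < l -> 2 * dotv u v <= l * dotv u u + l^-1 * dotv v v.
Proof.
move=> l0; have := dotv_ge0 (l *: u - v).
rewrite !dotvBl !dotvBr !dotvZl !dotvZr (dotvC v u) => H.
have : 0 <= l^-1 * (l * (l * dotv u u) - l * dotv u v - (l * dotv u v - dotv v v)).
  by rewrite mulr_ge0 // invr_ge0 ltW.
rewrite !mulrBr !mulrA mulVf ?gt_eqF // !mul1r; lra.
Qed.

Lemma quad_ge0 u v (l : R) : 0 <= l ^+ 2 * dotv u u - 2 * l * dotv u v + dotv v v.
Proof.
have := dotv_ge0 (l *: u - v).
rewrite !dotvBl !dotvBr !dotvZl !dotvZr (dotvC v u); lra.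
Qed.

Lemma cauchy2 u v : dotv u v ^+ 2 <= dotv u u * dotv v v.
Proof.
have A0 := dotv_ge0 u; have C0 := dotv_ge0 v.
have [A|A] := eqVneq (dotv u u) 0.
  suff B : dotv u v = 0 by rewrite B A expr0n mul0r.
  apply/eqP; apply/negPn/negP => B.
  have := quad_ge0 u v ((dotv v v + 1) / (2 * dotv u v)).
  have E : 2 * ((dotv v v + 1) / (2 * dotv u v)) * dotv u v = dotv v v + 1.
    by field; rewrite B.
  rewrite A mulr0 E; lra.
have Ap : 0 < dotv u u by rewrite lt_neqAle eq_sym A.
have := quad_ge0 u v (dotv u v / dotv u u).
have E : (dotv u v / dotv u u) ^+ 2 * dotv u u - 2 * (dotv u v / dotv u u) * dotv u v
   = - (dotv u v ^+ 2 / dotv u u) by field.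
rewrite E => H.
have : dotv u v ^+ 2 / dotv u u <= dotv v v by lra.
by rewrite ler_pdivrMr // mulrC.
Qed.

Lemma cauchy u v : dotv u v <= enorm u * enorm v.
Proof.
apply: (le_trans (ler_norm _)).
rewrite -(@ler_pXn2r _ 2) // ?nnegrE ?mulr_ge0 ?enorm_ge0 //.
by rewrite real_normK ?num_real // exprMn !enorm_sq cauchy2.
Qed.

Lemma enorm_triangle u v : enorm (u + v) <= enorm u + enorm v.
Proof.
rewrite -(@ler_pXn2r _ 2) // ?nnegrE ?addr_ge0 ?enorm_ge0 //.
rewrite enorm_sq dotvDl !dotvDr (dotvC v u) sqrrD -!enorm_sq.
have := cauchy u v; lra.
Qed.

Lemma enormN u : enorm (- u) = enorm u.
Proof. by rewrite /enorm dotvNl dotvC dotvNl opprK. Qed.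
End Dot.
Lemma convW (R : realType) d (W : set 'rV[R]_d) y z (s : R) :
  convex_set W -> W y -> W z -> 0 <= s -> s <= 1 -> W (s *: y + (1 - s) *: z).
Proof.
move=> cW Wy Wz s0 s1.
have := cW y z (Itv01 s0 s1); rewrite !inE => /(_ Wy Wz).
by [].
Qed.
Arguments convW {R d W y z s}.
Lemma proj_nonexp (R : realType) d (W : set 'rV[R]_d) y p z :
  convex_set W -> is_proj W y p -> W z ->
  dotv (p - z) (p - z) <= dotv (y - z) (y - z).
Proof.
move=> cW [Wp pmin] Wz.
have key : forall s : R, 0 < s -> s <= 1 ->
    2 * dotv (y - p) (z - p) <= s * dotv (z - p) (z - p).
  move=> s s0 s1.
  have Wq := convW cW Wz Wp (ltW s0) s1.
  have := pmin _ Wq.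
  rewrite -(@ler_pXn2r _ 2) // ?nnegrE ?enorm_ge0 // !enorm_sq.
  have -> : y - (s *: z + (1 - s) *: p) = (y - p) - s *: (z - p).
    by apply/rowP => j; rewrite !mxE; ring.
  move: (y - p) (z - p) => a b.
  rewrite dotvBl !dotvBr !dotvZl !dotvZr (dotvC b a) => H.
  have : s * (2 * dotv a b) <= s * (s * dotv b b) by lra.
  by rewrite ler_pM2l.
have key0 : dotv (y - p) (z - p) <= 0.
  rewrite leNgt; apply/negP => H.
  have zz := dotv_ge0 (z - p).
  pose s := Num.min 1 (dotv (y - p) (z - p) / (dotv (z - p) (z - p) + 1)).
  have s0 : 0 < s by rewrite lt_min ltr01 /= divr_gt0 //; lra.
  have s1 : s <= 1 by rewrite ge_min lexx.
  have := key s s0 s1.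
  have : s * (dotv (z - p) (z - p) + 1) <= dotv (y - p) (z - p).
    by rewrite -ler_pdivlMr; [rewrite ge_min lexx orbT | lra].
  nra.
have -> : y - z = (y - p) - (z - p) by apply/rowP => j; rewrite !mxE; ring.
have -> : p - z = - (z - p) by apply/rowP => j; rewrite !mxE; ring.
move: key0; move: (y - p) (z - p) => a b key0.
rewrite dotvNl dotvC dotvNl opprK dotvBl !dotvBr (dotvC b a).
have := dotv_ge0 a; lra.
Qed.
Section Deriv.
Context {R : realType} {d : nat}.

Lemma dot_cont (w : 'rV[R]_d) : continuous (fun u : 'rV[R]_d => dotv u w).
Proof.
rewrite /dotv; apply: continuous_big.
  exact: add_continuous.
move=> i _ u.
exact: (@continuous_comp _ _ _ (fun M : 'rV[R]_d => M ord0 i) ( *%R^~ (w ord0 i)) u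
  (@coord_continuous R 1 d ord0 i u) (@mulrr_continuous R (w ord0 i) _)).
Qed.

Lemma grad_dot (phi : 'rV[R]_d -> R) y v : dotv (grad phi y) v = 'd phi y v.
Proof.
have -> : 'd phi y v = 'd phi y (\sum_(i < d) v ord0 i *: basisv i).
  congr (fun u => 'd phi y u); apply/rowP => j; rewrite summxE.
  rewrite (bigD1 j) //= big1 ?addr0; first by rewrite !mxE eqxx mulr1.
  by move=> i /negbTE ij; rewrite !mxE eq_sym ij mulr0.
rewrite linear_sum /dotv; apply: eq_bigr => i _.
by rewrite linearZ /= !mxE mulrC.
Qed.

Lemma shift_quot (V : normedModType R) (F : 'rV[R]_d -> V) z v s :
 (fun h : R => h^-1 *: (((fun t : R => F (z + t *: v)) \o shift s) (h *: 1) - F (z + s *: v)))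
 = (fun h => h^-1 *: ((F \o shift (z + s *: v)) (h *: v) - F (z + s *: v))).
Proof.
apply/funext => h /=; congr (_ *: (F _ - _)).
apply/rowP => j; rewrite !mxE /GRing.scale /=; ring.
Qed.

Lemma derivable_shift (V : normedModType R) (F : 'rV[R]_d -> V) z v s :
  derivable (fun t : R => F (z + t *: v)) s 1 = derivable F (z + s *: v) v.
Proof. by rewrite /derivable shift_quot. Qed.

Lemma derive_shift (V : normedModType R) (F : 'rV[R]_d -> V) z v s :
  derive (fun t : R => F (z + t *: v)) s 1 = derive F (z + s *: v) v.
Proof. by rewrite /derive shift_quot. Qed.

Lemma derive_dot (G : 'rV[R]_d -> 'rV[R]_d) y v w :
  derivable G y v ->
  derivable (fun u => dotv (G u) w) y v /\
  derive (fun u => dotv (G u) w) y v = dotv (derive G y v) w.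
Proof.
move=> dG.
have E : (fun h : R => h^-1 *: (((fun u => dotv (G u) w) \o shift y) (h *: v) - dotv (G y) w))
   = (fun u => dotv u w) \o (fun h : R => h^-1 *: ((G \o shift y) (h *: v) - G y)).
  by apply/funext => h /=; rewrite dotvZl dotvBl.
have C : (fun u => dotv u w) \o (fun h : R => h^-1 *: ((G \o shift y) (h *: v) - G y)) @ 0^'
    --> dotv (derive G y v) w.
  by apply: continuous_cvg; [exact: dot_cont | exact: dG].
split; first by rewrite /derivable E; apply/cvg_ex; eexists; exact: C.
by rewrite /derive E; apply: cvg_lim.
Qed.
End Deriv.
Lemma is_derive_sqk (R : realType) (k t : R) :
  is_derive t 1 (fun s : R => k * (s * s)) (k * (t + t)).
Proof.
have H : is_derive t (1:R) (k \*: ((@idfun R) * (@idfun R))) (k *: (t *: 1 + t *: 1)).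
  apply: is_deriveZ; apply: is_deriveM; exact: is_derive_id.
have -> : (fun s : R => k * (s * s)) = k \*: ((@idfun R) * (@idfun R)) by apply/funext.
apply: (is_derive_eq H).
by rewrite !scaler1.
Qed.
Lemma strong_conv (R : realType) d (W : set 'rV[R]_d) (phi : 'rV[R]_d -> R) (alpha : R) :
  convex_set W ->
  (forall y, W y -> twice_diff phi y /\
     forall v, alpha * enorm v ^+ 2 <= dotv v (hess phi y v)) ->
  forall y z, W y -> W z ->
  phi y - phi z <= dotv (grad phi y) (y - z) - alpha / 2 * enorm (y - z) ^+ 2.
Proof.
move=> cW Hphi y z Wy Wz.
set v := y - z.
have Wg : forall t : R, 0 <= t -> t <= 1 -> W (z + t *: v).
  move=> t t0 t1; have := convW cW Wy Wz t0 t1.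
  congr W; apply/rowP => j; rewrite !mxE; ring.
pose c := dotv v v.
pose k := alpha * c / 2.
pose phi0 := fun t : R => phi (z + t *: v).
pose phi1 := fun t : R => dotv (grad phi (z + t *: v)) v.
pose chi := fun t : R => phi0 t - k * (t * t).
pose chi1 := fun t : R => phi1 t - k * (t + t).
have D1 : forall t : R, 0 <= t -> t <= 1 -> is_derive t 1 phi0 (phi1 t).
  move=> t t0 t1; have [[dphi _] _] := Hphi _ (Wg t t0 t1).
  apply: DeriveDef.
    by rewrite /phi0 derivable_shift; exact: diff_derivable.
  by rewrite /phi0 derive_shift deriveE // /phi1 grad_dot.
have D2 : forall t : R, 0 <= t -> t <= 1 ->
    is_derive t 1 phi1 (dotv (hess phi (z + t *: v) v) v).
  move=> t t0 t1; have [[_ dgr] _] := Hphi _ (Wg t t0 t1).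
  have dG : derivable (grad phi) (z + t *: v) v by exact: diff_derivable.
  have [dd de] := derive_dot _ _ _ v dG.
  apply: DeriveDef.
    by rewrite /phi1 (derivable_shift _ (fun u => dotv (grad phi u) v)).
  by rewrite /phi1 (derive_shift _ (fun u => dotv (grad phi u) v)) de deriveE.
have Dchi : forall t : R, 0 <= t -> t <= 1 -> is_derive t 1 chi (chi1 t).
  move=> t t0 t1.
  have := is_deriveB (D1 t t0 t1) (is_derive_sqk _ k t).
  by [].
have Dchi1 : forall t : R, 0 <= t -> t <= 1 ->
    is_derive t 1 chi1 (dotv (hess phi (z + t *: v) v) v - k * (1 + 1)).
  move=> t t0 t1.
  have H2 : is_derive t (1:R) (fun s : R => k * (s + s)) (k * (1 + 1)).
    have H : is_derive t (1:R) (k \*: ((@idfun R) + (@idfun R))) (k *: (1 + 1)).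
      apply: is_deriveZ; apply: is_deriveD; exact: is_derive_id.
    have -> : (fun s : R => k * (s + s)) = k \*: ((@idfun R) + (@idfun R)) by apply/funext.
    exact: H.
  have := is_deriveB (D2 t t0 t1) H2.
  by [].
have zv1 : z + 1 *: v = y by rewrite scale1r /v [z + _]addrC subrK.
have zv0 : z + 0 *: v = z by rewrite scale0r addr0.
have [c0 c0in E0] : exists2 c0, c0 \in `]0, 1[%R & chi 1 - chi 0 = chi1 c0 * (1 - 0).
  apply: MVT; first exact: ltr01.
    move=> t; rewrite in_itv /= => /andP[t0 t1]; apply: Dchi; exact: ltW.
  apply: derivable_within_continuous => t; rewrite in_itv /= => /andP[t0 t1].
  by case: (Dchi t t0 t1).
move: c0in; rewrite in_itv /= => /andP[c00 c01].
have [c1 c1in E1] : exists2 c1, c1 \in `]c0, 1[%R &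
    chi1 1 - chi1 c0 = (dotv (hess phi (z + c1 *: v) v) v - k * (1 + 1)) * (1 - c0).
  apply: (MVT (f := chi1) (df := fun t => dotv (hess phi (z + t *: v) v) v - k * (1 + 1))).
      exact: c01.
    move=> t; rewrite in_itv /= => /andP[t0 t1]; apply: Dchi1; first exact: (le_trans (ltW c00) (ltW t0)).
    exact: ltW.
  apply: derivable_within_continuous => t; rewrite in_itv /= => /andP[t0 t1].
  by case: (Dchi1 t (le_trans (ltW c00) t0) t1).
move: c1in; rewrite in_itv /= => /andP[c10 c11].
have hb : k * (1 + 1) <= dotv (hess phi (z + c1 *: v) v) v.
  have [_ Hh] := Hphi _ (Wg c1 (le_trans (ltW c00) (ltW c10)) (ltW c11)).
  have := Hh v; rewrite enorm_sq dotvC -/c /k => hh.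
  have -> : alpha * c / 2 * (1 + 1) = alpha * c by field.
  exact: hh.
have L1 : chi1 c0 <= chi1 1.
  have : 0 <= (dotv (hess phi (z + c1 *: v) v) v - k * (1 + 1)) * (1 - c0).
    by rewrite mulr_ge0 // subr_ge0 // ltW.
  rewrite -E1 subr_ge0; exact.
have e1 : chi 1 = phi y - k.
  by rewrite /chi /phi0 /= !mulr1 scale1r /v [z + _]addrC subrK.
have e0 : chi 0 = phi z by rewrite /chi /phi0 /= !mulr0 subr0 scale0r addr0.
have e2 : chi1 1 = dotv (grad phi y) v - k * (1 + 1) by rewrite /chi1 /phi1 /= scale1r /v [z + _]addrC subrK.
rewrite e1 e0 subr0 mulr1 in E0.
rewrite e2 in L1.
have ek : alpha / 2 * enorm v ^+ 2 = k by rewrite enorm_sq /k /c; field.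
rewrite ek.
clear Dchi Dchi1 D1 D2 E1 hb e1 e2 ek.
move: E0 L1; clearbody chi1 chi phi0 phi1; move: (chi1 c0) (phi y) (phi z) (dotv (grad phi y) v) k => a b e f kk.
lra.
Qed.
Lemma ln_le_sub1 (R : realType) (x : R) : 0 < x -> ln x <= x - 1.
Proof.
move=> x0; have := expR_ge1Dx (ln x); rewrite lnK ?posrE //; lra.
Qed.

Lemma harm_aux (R : realType) n :
  \sum_(2 <= t < n.+2) (t%:R : R)^-1 <= ln (n.+1)%:R.
Proof.
elim: n => [|n IH]; first by rewrite big_geq // ln1.
rewrite big_nat_recr //=.
have step : ((n.+2)%:R : R)^-1 <= ln (n.+2)%:R - ln (n.+1)%:R.
  rewrite -ln_div ?posrE ?ltr0n //.
  have := @ln_le_sub1 R ((n.+1)%:R / (n.+2)%:R) ltac:(by rewrite divr_gt0 ?ltr0n).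
  have -> : ((n.+1)%:R / (n.+2)%:R : R) - 1 = - ((n.+2)%:R)^-1.
    have -> : ((n.+2)%:R : R) = (n.+1)%:R + 1 by rewrite natr1.
    by field; rewrite gt_eqF //; have := ler0n R n; lra.
  have -> : ln ((n.+1)%:R / (n.+2)%:R : R) = - ln ((n.+2)%:R / (n.+1)%:R).
    by rewrite -lnV ?posrE ?divr_gt0 ?ltr0n // invf_div.
  by rewrite lerN2.
apply: (le_trans (lerD IH step)); by rewrite addrC subrK.
Qed.

Lemma harm_ln (R : realType) (k T : nat) : (2 <= k)%N -> (k < T)%N ->
  \sum_(k <= t < T) (t%:R : R)^-1 <= ln T%:R.
Proof.
move=> k2 kT.
have -> : T = (T.-2).+2 by rewrite !prednK //; lia.
apply: (le_trans _ (le_trans (harm_aux R T.-2) _)).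
  rewrite [X in _ <= X](big_cat_nat (n := k)) //=; last lia.
  rewrite lerDr; apply: sumr_ge0 => i _; rewrite invr_ge0 ler0n //.
rewrite ler_ln ?posrE ?ltr0n // ler_nat; lia.
Qed.
Lemma tele (R : realType) (D : nat -> R) k tau m :
  \sum_(k <= t < k + m) ((t + tau)%:R * (D (t + tau)%N - D (t + tau).+1))
    + ((k + m) + tau)%:R * D ((k + m) + tau)%N
  = (k + tau)%:R * D (k + tau)%N + \sum_(k <= t < k + m) D (t + tau).+1.
Proof.
elim: m => [|m IH]; first by rewrite addn0 !big_geq // add0r addr0.
rewrite addnS !big_nat_recr /= ?leq_addr //.
rewrite addSn -natr1 [in RHS]addrA -IH; ring.
Qed.

Lemma shiftsum (R : realType) (D : nat -> R) k tau m :
  \sum_(k <= t < k + m) D (t + tau).+1 + \sum_(j < tau.+1) D (k + j)%N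
  = \sum_(k <= t < k + m) D t + \sum_(j < tau.+1) D ((k + m) + j)%N.
Proof.
elim: m => [|m IH]; first by rewrite addn0 !big_geq.
rewrite addnS !big_nat_recr /= ?leq_addr //.
have E1 : \sum_(j < tau.+1) D ((k + m) + j)%N
          = D (k + m)%N + \sum_(j < tau) D ((k + m).+1 + j)%N.
  by rewrite big_ord_recl /= addn0; congr (_ + _); apply: eq_bigr => j _; rewrite /bump /= addnS addSn.
have E2 : \sum_(j < tau.+1) D ((k + m).+1 + j)%N
          = \sum_(j < tau) D ((k + m).+1 + j)%N + D ((k + m) + tau).+1.
  by rewrite big_ord_recr /= addSn.
rewrite E2.
have : \sum_(k <= i < k + m) D (i + tau).+1 + \sum_(j < tau.+1) D (k + j)%N
  = \sum_(k <= i < k + m) D i + D (k + m)%N + \sum_(j < tau) D ((k + m).+1 + j)%N.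
  by rewrite IH E1 addrA.
move=> H.
rewrite -addrA [D _ + _]addrC addrA H.
rewrite -!addrA; congr (_ + _); rewrite addrC -addrA; congr (_ + _).
Qed.

Lemma sum_final (R : realType) (D : nat -> R) (a G : R) k tau T :
  0 < a -> (k < T)%N -> (forall s, 0 <= D s) ->
  (forall s, (s <= T + tau)%N -> D s <= G ^+ 2) ->
  a / 6 * \sum_(k <= t < T) ((t + tau)%:R * (D (t + tau)%N - D (t + tau).+1))
    - a / 3 * \sum_(k <= t < T) D t
  <= - (a / 6) * \sum_(0 <= t < T) D t + a * G ^+ 2 * (3 * k%:R + 5 * tau%:R + 3) / 6.
Proof.
move=> a0 kT D0 DG.
have [m Tm] : exists m, T = (k + m)%N by exists (T - k)%N; lia.
subst T; move: DG => DG'.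
have E := tele _ D k tau m.
have E2 := shiftsum _ D k tau m.
have B1 : (k + tau)%:R * D (k + tau)%N <= (k + tau)%:R * G ^+ 2.
  by rewrite ler_wpM2l // DG' //; lia.
have B2 : \sum_(j < tau.+1) D ((k + m) + j)%N <= tau.+1%:R * G ^+ 2.
  apply: (@le_trans _ _ (\sum_(j < tau.+1) G ^+ 2)).
    by apply: ler_sum => j _; apply: DG'; move: (ltn_ord j); lia.
  by rewrite sumr_const card_ord mulr_natl.
have B3 : 0 <= \sum_(j < tau.+1) D (k + j)%N by apply: sumr_ge0.
have B4 : 0 <= ((k + m) + tau)%:R * D ((k + m) + tau)%N by rewrite mulr_ge0.
have S0 : \sum_(0 <= t < k + m) D t = \sum_(0 <= t < k) D t + \sum_(k <= t < k + m) D t.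
  by rewrite (big_cat_nat (n := k)) //; lia.
have B5 : \sum_(0 <= t < k) D t <= k%:R * G ^+ 2.
  apply: (@le_trans _ _ (\sum_(0 <= j < k) G ^+ 2)).
    by rewrite !big_nat; apply: ler_sum => j /andP[_ jk]; apply: DG'; lia.
  by rewrite sumr_const_nat subn0 mulr_natl.
have G0 : 0 <= G ^+ 2 by rewrite sqr_ge0.
rewrite S0.
move: E E2 B1 B2 B3 B4 B5.
move: (\sum_(k <= t < k + m) ((t + tau)%:R * (D (t + tau)%N - D (t + tau).+1))) => Y.
move: (\sum_(k <= t < k + m) D (t + tau).+1) => S2.
move: (\sum_(k <= t < k + m) D t) => S3.
move: (\sum_(0 <= t < k) D t) => S4.
move: (\sum_(j < tau.+1) D (k + j)%N) => S5.
move: (\sum_(j < tau.+1) D ((k + m) + j)%N) => S6.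
move: ((k + m + tau)%:R * D (k + m + tau)%N) => Z.
have e1 : (tau.+1%:R : R) = tau%:R + 1 by rewrite natr1.
rewrite !natrD e1.
move: (D (k + tau)%N) => Dk.
have K0 : (0:R) <= k%:R by [].
have T0 : (0:R) <= tau%:R by [].
move: K0 T0; move: (k%:R : R) (tau%:R : R) => K Tt K0 T0.
move: G0; move: (G ^+ 2) => g2 G0.
move=> E E2 B1 B2 B3 B4 B5.
have P1 : 0 <= g2 * K by rewrite mulr_ge0.
have P2 : 0 <= g2 * Tt by rewrite mulr_ge0.
have H : Y - 2 * S3 + S4 + S3 <= g2 * (3 * K + 5 * Tt + 3) by nra.
rewrite -subr_ge0.
have -> : - (a / 6) * (S4 + S3) + a * g2 * (3 * K + 5 * Tt + 3) / 6 - (a / 6 * Y - a / 3 * S3)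
  = a / 6 * (g2 * (3 * K + 5 * Tt + 3) - (Y - 2 * S3 + S4 + S3)) by field.
rewrite mulr_ge0 // ?subr_ge0 //.
by rewrite divr_ge0 // ltW.
Qed.
Lemma rec_div (R : realType) (a u P Dl Q : R) : 0 < a -> 0 < u ->
  2 * (3 / (a * u)) * P <= Dl + (3 / (a * u)) ^+ 2 * Q ->
  P <= a * u / 6 * Dl + 3 / (2 * (a * u)) * Q.
Proof.
move=> a0 u0 H.
have e0 : 0 < 2 * (3 / (a * u)) by rewrite mulr_gt0 // divr_gt0 // mulr_gt0.
rewrite -(ler_pM2l e0).
have -> : 2 * (3 / (a * u)) * (a * u / 6 * Dl + 3 / (2 * (a * u)) * Q)
  = Dl + (3 / (a * u)) ^+ 2 * Q by field; rewrite ?gt_eqF.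
exact: H.
Qed.

Arguments rec_div {R a u P Dl Q}.

Lemma per_t (R : realType) d (gt et st xt xu xu1 xs gk : 'rV[R]_d)
  (fkxt fkxs a ut tt Lg taur : R) :
  0 < a -> 0 < tt -> tt <= ut -> 0 <= taur ->
  fkxt - fkxs <= dotv gk (xt - xs) - a / 2 * enorm (xt - xs) ^+ 2 ->
  gk = gt - et - st ->
  dotv (xu1 - xs) (xu1 - xs) <= dotv (xu - xs) (xu - xs)
     - 2 * (3 / (a * ut)) * dotv gt (xu - xs) + (3 / (a * ut)) ^+ 2 * dotv gt gt ->
  enorm gt <= Lg ->
  enorm (xt - xu) <= taur * (3 * Lg / (a * tt)) ->
  fkxt - fkxs <= a / 6 * (ut * (dotv (xu - xs) (xu - xs) - dotv (xu1 - xs) (xu1 - xs)))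
     + 3 * Lg ^+ 2 * (1 + taur) / a * tt^-1
     + (3 / (2 * a) * enorm et ^+ 2 - dotv st (xt - xs))
     - a / 3 * dotv (xt - xs) (xt - xs).
Proof.
move=> a0 t0 tu tau0 SC gkE rec gL del.
have u0 : 0 < ut by exact: lt_le_trans t0 tu.
have an : a != 0 by rewrite gt_eqF.
have tn : tt != 0 by rewrite gt_eqF.
have un : ut != 0 by rewrite gt_eqF.
have L0 : 0 <= Lg by exact: le_trans (enorm_ge0 _) gL.
rewrite !enorm_sq in SC *.
have Q : dotv gt gt <= Lg ^+ 2.
  by rewrite -enorm_sq; apply: ler_pM; rewrite ?enorm_ge0.
have rec' : 2 * (3 / (a * ut)) * dotv gt (xu - xs) <=
   (dotv (xu - xs) (xu - xs) - dotv (xu1 - xs) (xu1 - xs)) + (3 / (a * ut)) ^+ 2 * dotv gt gt.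
  move: rec; move: (2 * (3 / (a * ut)) * dotv gt (xu - xs)) ((3 / (a * ut)) ^+ 2 * dotv gt gt) => p q.
  lra.
have R1 := rec_div a0 u0 rec'.
have Y := @young R d (- et) (xt - xs) (3 / a) ltac:(by rewrite divr_gt0).
rewrite !dotvNl !dotvNr invf_div opprK in Y.
have CS := cauchy gt (xt - xu).
have Del : dotv gt (xt - xu) <= Lg * (taur * (3 * Lg / (a * tt))).
  apply: (le_trans CS); apply: ler_pM; rewrite ?enorm_ge0 //.
have split : dotv gt (xt - xs) = dotv gt (xu - xs) + dotv gt (xt - xu).
  by rewrite -dotvDr; congr dotv; apply/rowP => j; rewrite !mxE; ring.
rewrite gkE (dotvBl (gt - et) st) (dotvBl gt et) split in SC.
have B1 : 3 / (2 * (a * ut)) * dotv gt gt <= 3 * Lg ^+ 2 / (2 * a) * tt^-1.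
  apply: (le_trans (ler_wpM2l _ Q)).
    by rewrite divr_ge0 // mulr_ge0 // mulr_ge0 // ltW.
  have -> : 3 / (2 * (a * ut)) * Lg ^+ 2 = 3 * Lg ^+ 2 / (2 * a) * ut^-1.
    by field; rewrite ?an ?tn ?un.
  apply: ler_wpM2l.
    by rewrite divr_ge0 ?mulr_ge0 ?sqr_ge0 // ltW.
  by rewrite lef_pV2 ?posrE.
have B2 : Lg * (taur * (3 * Lg / (a * tt))) = 3 * Lg ^+ 2 * taur / a * tt^-1.
  by field; rewrite ?an ?tn ?un.
have B3 : 3 * Lg ^+ 2 * (1 + taur) / a * tt^-1
   = 3 * Lg ^+ 2 / (2 * a) * tt^-1 + 3 * Lg ^+ 2 * taur / a * tt^-1
     + 3 * Lg ^+ 2 / (2 * a) * tt^-1.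
  by field; rewrite ?an ?tn ?un.
have B4 : 0 <= 3 * Lg ^+ 2 / (2 * a) * tt^-1.
  by rewrite mulr_ge0 ?divr_ge0 ?mulr_ge0 ?sqr_ge0 ?invr_ge0 // ltW.
have B5 : a * ut / 6 * (dotv (xu - xs) (xu - xs) - dotv (xu1 - xs) (xu1 - xs))
   = a / 6 * (ut * (dotv (xu - xs) (xu - xs) - dotv (xu1 - xs) (xu1 - xs))) by ring.
have B6 : 2 / (3 / a) = a / 3 * 2 by field; rewrite ?an ?tn ?un.
have e1 : 3 / (2 * a) * dotv et et = (3 / a * dotv et et) / 2 by field; rewrite ?an.
have e2 : a / 6 * dotv (xt - xs) (xt - xs) = (a / 3 * dotv (xt - xs) (xt - xs)) / 2 by field.
have e3 : a / 2 * dotv (xt - xs) (xt - xs) = (a / 3 * dotv (xt - xs) (xt - xs)) * (3 / 2) by field.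
have e4 : a / 3 * dotv (xt - xs) (xt - xs) = a / 3 * dotv (xt - xs) (xt - xs) by [].
rewrite B3 -B5 e1.
rewrite e3 in SC.
move: SC R1 Y Del B1 B2 B4.
move: (3 / (2 * (a * ut)) * dotv gt gt) (3 * Lg ^+ 2 / (2 * a) * tt^-1) (3 * Lg ^+ 2 * taur / a * tt^-1) => p1 p2 p3.
move: (a * ut / 6 * (dotv (xu - xs) (xu - xs) - dotv (xu1 - xs) (xu1 - xs))) => p4.
move: (a / 3 * dotv (xt - xs) (xt - xs)) (3 / a * dotv et et) => p5 p6.
move: (dotv gt (xu - xs)) (dotv gt (xt - xu)) (dotv et (xt - xs)) (dotv st (xt - xs)) => q1 q2 q3 q4.
move: (Lg * (taur * (3 * Lg / (a * tt)))) => q5.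
move=> SC R1 Y Del B1 B2 B4.
lra.
Qed.

Arguments proj_nonexp {R d W y p z}.
Arguments strong_conv {R d W phi alpha}.
Arguments sum_final {R D a G k tau T}.
Arguments per_t {R d gt et st xt xu xu1 xs gk fkxt fkxs a ut tt Lg taur}.
Theorem lemma12
  (R : realType) (dT : measure_display) (Omega : measurableType dT)
  (P : probability Omega R) (Fil : nat -> set (set Omega))
  (d T tau k h : nat) (W : set 'rV[R]_d)
  (F : nat -> Omega -> ('I_h.+1 -> 'rV[R]_d) -> R)
  (fk : nat -> Omega -> 'rV[R]_d -> R)
  (x : nat -> Omega -> 'rV[R]_d) (g eps : nat -> Omega -> 'rV[R]_d)
  (Lf beta alpha Lc G Lg : R) :
  let f := fun t w (y : 'rV[R]_d) => F t w (fun _ => y) in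
  let eta := fun t : nat => 3 / (alpha * t%:R) in
  convex_set W -> filtration Fil ->
  (1 <= tau)%N -> (1 <= h)%N -> (tau < k)%N -> (k < T)%N ->
  0 < alpha ->
  (* f_{t;k}(y) = E[f_t(y) | F_{t-k}] *)
  (forall t y, (k <= t < T)%N -> W y ->
     is_cond_exp P (Fil (t - k)%N) (fun w => f t w y) (fun w => fk t w y)) ->
  (* Condition 1 *)
  (forall t w, (t < T)%N -> forall y z, W y -> W z ->
     `|f t w y - f t w z| <= Lf * enorm (y - z)) ->
  (forall t w, (t < T)%N -> forall y, W y ->
     twice_diff (f t w) y /\
     forall v, enorm (hess (f t w) y v) <= beta * enorm v) ->
  (forall t w, (k <= t < T)%N -> forall y, W y ->
     twice_diff (fk t w) y /\
     forall v, alpha * enorm v ^+ 2 <= dotv v (hess (fk t w) y v)) ->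
  (* Condition 2 *)
  (forall t w, (t < T)%N -> forall (ys : 'I_h.+1 -> 'rV[R]_d) (j : 'I_h.+1) z,
     (forall i, W (ys i)) -> W z ->
     `|F t w ys - F t w (fun i => if i == j then z else ys i)|
       <= Lc * enorm (ys j - z)) ->
  (* Condition 3 *)
  (forall y z, W y -> W z -> enorm (y - z) <= G) ->
  (forall t w, (t < T)%N -> enorm (g t w) <= Lg) ->
  (* the method *)
  (forall w t, (t <= tau)%N -> x t w = x 0%N w) ->
  (forall w, W (x 0%N w)) ->
  (forall w t, (tau <= t <= T - 1 + tau)%N ->
     g (t - tau)%N w = grad (f (t - tau)%N w) (x (t - tau)%N w) + eps (t - tau)%N w
     /\ is_proj W (x t w - eta t *: g (t - tau)%N w) (x t.+1 w)) ->
  forall w (xs : 'rV[R]_d), W xs ->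
    let epss := fun t => grad (f t w) (x t w) - grad (fk t w) (x t w) in
    \sum_(k <= t < T) (fk t w (x t w) - fk t w xs)
    <= - (alpha / 6) * \sum_(0 <= t < T) enorm (x t w - xs) ^+ 2
       + alpha * G ^+ 2 * (3 * k%:R + 5 * tau%:R + 3) / 6
       + 3 * Lg ^+ 2 * (1 + tau%:R) / alpha * ln T%:R
       + \sum_(k <= t < T) (3 / (2 * alpha) * enorm (eps t w) ^+ 2
                            - dotv (epss t) (x t w - xs)).
Proof.
move=> f eta cW HFil tau1 h1 tauk kT a0 Hcond Lip Hf Hfk Lcond GB gB x0eq Wx0 Hmeth w xs Wxs.
have T0 : (0 < T)%N by lia.
have Wall : forall s, (s <= T + tau)%N -> W (x s w).
  move=> s sle; case: (leqP s tau) => st.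
    by rewrite x0eq.
  case: s st sle => [|s] st sle; first lia.
  have [_ Hp] := Hmeth w s ltac:(apply/andP; split; lia).
  by case: Hp.
have Lg0 : 0 <= Lg := le_trans (enorm_ge0 _) (gB 0%N w T0).
have G0 : 0 <= G := le_trans (enorm_ge0 _) (GB _ _ Wxs Wxs).
pose D := fun s => dotv (x s w - xs) (x s w - xs).
have DB : forall s, (s <= T + tau)%N -> D s <= G ^+ 2.
  move=> s sle; rewrite /D -enorm_sq; have H := GB _ _ (Wall s sle) Wxs.
  by rewrite !expr2; apply: ler_pM; rewrite ?enorm_ge0.
have D0 : forall s, 0 <= D s by move=> s; exact: dotv_ge0.
have etapos : forall s, (0 < s)%N -> 0 < eta s.
  by move=> s s0; rewrite /eta divr_gt0 ?mulr_gt0 ?ltr0n.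
have stepb : forall s, (tau <= s)%N -> (s <= T - 1 + tau)%N ->
    enorm (x s.+1 w - x s w) <= eta s * enorm (g (s - tau)%N w).
  move=> s s1 s2; have [_ Hp] := Hmeth w s ltac:(apply/andP; split; lia).
  have Ws : W (x s w) by apply: Wall; lia.
  have := proj_nonexp cW Hp Ws.
  have -> : x s w - eta s *: g (s - tau)%N w - x s w = - (eta s *: g (s - tau)%N w).
    by apply/rowP => i; rewrite !mxE; ring.
  rewrite dotvNl dotvNr opprK dotvZl dotvZr => H.
  have e0 : 0 < eta s by apply: etapos; lia.
  have n1 : 0 <= eta s * enorm (g (s - tau)%N w) by rewrite mulr_ge0 ?enorm_ge0 // ltW.
  rewrite -(@ler_pXn2r _ 2) ?nnegrE ?enorm_ge0 //.
  by rewrite enorm_sq exprMn enorm_sq expr2 -mulrA.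
have etab : forall t j, (0 < t)%N -> eta (t + j)%N <= 3 / (alpha * t%:R).
  move=> t j t0; rewrite /eta ler_wpM2l // lef_pV2 ?posrE ?mulr_gt0 ?ltr0n ?addn_gt0 ?t0 //.
  by rewrite ler_pM2l // ler_nat leq_addr.
have delay : forall t, (k <= t < T)%N -> forall j, (j <= tau)%N ->
    enorm (x t w - x (t + j)%N w) <= j%:R * (3 * Lg / (alpha * t%:R)).
  move=> t /andP[kt tT]; elim => [|j IH] jle.
    rewrite addn0 subrr mul0r /enorm /dotv big1 ?sqrtr0 // => i _.
    by rewrite mxE mul0r.
  have IH' := IH (ltnW jle).
  have -> : x t w - x (t + j.+1)%N w
      = (x t w - x (t + j)%N w) + - (x (t + j).+1 w - x (t + j)%N w).
    by rewrite addnS; apply/rowP => i; rewrite !mxE; ring.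
  apply: (le_trans (enorm_triangle _ _)); rewrite enormN.
  have l1 : (tau <= t + j)%N by lia.
  have l2 : (t + j <= T - 1 + tau)%N by lia.
  have l3 : (t + j - tau < T)%N by lia.
  have l4 : (0 < t)%N by lia.
  have sb := stepb _ l1 l2.
  have gb := gB _ w l3.
  have eb := etab t j l4.
  have e0 : 0 <= eta (t + j)%N by apply/ltW/etapos; lia.
  have Pb : eta (t + j)%N * enorm (g (t + j - tau)%N w) <= 3 / (alpha * t%:R) * Lg.
    by apply: ler_pM; rewrite ?enorm_ge0.
  have -> : j.+1%:R * (3 * Lg / (alpha * t%:R)) = j%:R * (3 * Lg / (alpha * t%:R)) + 3 / (alpha * t%:R) * Lg.
    by rewrite -[j.+1%:R]natr1 mulrDl mul1r mulrAC.
  move: IH' sb Pb; move: (enorm (x t w - x (t + j)%N w)) (enorm (x (t + j).+1 w - x (t + j)%N w)).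
  move: (eta (t + j)%N * enorm (g (t + j - tau)%N w)) (j%:R * (3 * Lg / (alpha * t%:R))) (3 / (alpha * t%:R) * Lg).
  move=> p1 p2 p3 p4 p5 H1 H2 H3; lra.
pose C := 3 * Lg ^+ 2 * (1 + tau%:R) / alpha.
have pt : forall t, (k <= t < T)%N ->
  fk t w (x t w) - fk t w xs <= alpha / 6 * ((t + tau)%:R * (D (t + tau)%N - D (t + tau).+1))
    + C * (t%:R)^-1
    + (3 / (2 * alpha) * enorm (eps t w) ^+ 2
       - dotv (grad (f t w) (x t w) - grad (fk t w) (x t w)) (x t w - xs))
    - alpha / 3 * D t.
  move=> t kt'; have /andP[kt tT] := kt'.
  have Wt : W (x t w) by apply: Wall; lia.
  have SC := strong_conv cW (fun y Wy => Hfk t w kt' y Wy) (x t w) xs Wt Wxs.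
  have l1 : (tau <= t + tau <= T - 1 + tau)%N by apply/andP; split; lia.
  have [Hg Hp] := Hmeth w (t + tau)%N l1.
  rewrite addnK in Hg Hp.
  have H := proj_nonexp cW Hp Wxs.
  have rec : dotv (x (t + tau).+1 w - xs) (x (t + tau).+1 w - xs) <=
      dotv (x (t + tau)%N w - xs) (x (t + tau)%N w - xs)
      - 2 * eta (t + tau)%N * dotv (g t w) (x (t + tau)%N w - xs)
      + eta (t + tau)%N ^+ 2 * dotv (g t w) (g t w).
    apply: (le_trans H).
    have -> : x (t + tau)%N w - eta (t + tau)%N *: g t w - xs
        = (x (t + tau)%N w - xs) - eta (t + tau)%N *: g t w.
      by apply/rowP => i; rewrite !mxE; ring.
    move: (x (t + tau)%N w - xs) (eta (t + tau)%N) => v e.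
    rewrite dotvBl !dotvBr !dotvZl !dotvZr (dotvC v (g t w)).
    rewrite le_eqVlt; apply/orP; left; apply/eqP; ring.
  have gkE : grad (fk t w) (x t w)
      = g t w - eps t w - (grad (f t w) (x t w) - grad (fk t w) (x t w)).
    by rewrite Hg; apply/rowP => i; rewrite !mxE; ring.
  have del := delay t kt' tau (leqnn tau).
  have t0 : (0 : R) < t%:R by rewrite ltr0n; lia.
  have tu : (t%:R : R) <= (t + tau)%:R by rewrite ler_nat leq_addr.
  exact: (per_t a0 t0 tu (ler0n _ _) SC gkE rec (gB t w tT) del).
cbv zeta.
have S : \sum_(k <= t < T) (fk t w (x t w) - fk t w xs) <=
   \sum_(k <= t < T) (alpha / 6 * ((t + tau)%:R * (D (t + tau)%N - D (t + tau).+1))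
    + C * (t%:R)^-1
    + (3 / (2 * alpha) * enorm (eps t w) ^+ 2
       - dotv (grad (f t w) (x t w) - grad (fk t w) (x t w)) (x t w - xs))
    - alpha / 3 * D t).
  by rewrite !big_nat; apply: ler_sum => t; exact: pt.
have E : \sum_(k <= t < T) (alpha / 6 * ((t + tau)%:R * (D (t + tau)%N - D (t + tau).+1))
    + C * (t%:R)^-1
    + (3 / (2 * alpha) * enorm (eps t w) ^+ 2
       - dotv (grad (f t w) (x t w) - grad (fk t w) (x t w)) (x t w - xs))
    - alpha / 3 * D t)
  = alpha / 6 * \sum_(k <= t < T) ((t + tau)%:R * (D (t + tau)%N - D (t + tau).+1))
    + C * \sum_(k <= t < T) (t%:R)^-1
    + \sum_(k <= t < T) (3 / (2 * alpha) * enorm (eps t w) ^+ 2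
       - dotv (grad (f t w) (x t w) - grad (fk t w) (x t w)) (x t w - xs))
    - alpha / 3 * \sum_(k <= t < T) D t.
  by rewrite sumrB big_split /= big_split /= !mulr_sumr.
rewrite E in S.
have SF := sum_final a0 kT D0 DB.
have k2 : (2 <= k)%N by lia.
have HL := harm_ln R k T k2 kT.
have C0 : 0 <= C by rewrite /C divr_ge0 ?mulr_ge0 ?sqr_ge0 ?addr_ge0 // ltW.
have HC := ler_wpM2l C0 HL.
have ES : \sum_(0 <= t < T) enorm (x t w - xs) ^+ 2 = \sum_(0 <= t < T) D t.
  by apply: eq_bigr => t _; rewrite enorm_sq.
rewrite ES -/C.
move: S SF HC.
move: (\sum_(k <= t < T) (fk t w (x t w) - fk t w xs)) => s1.
move=> H1 H2 H3; lra.
Qed.
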